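(* Let $\mathcal{H}$ be a complex Hilbert space and $B,C\in\mathcal{B}(\mathcal{H})$. Then $$w^2\left(\begin{bmatrix}0 & B\\ C & 0\end{bmatrix}\right)\ge \frac18\Big[\max\{\|B+C^*\|^2,\|B-C^*\|^2\}+\|B+C^*\|\,\|B-C^*\|\Big]\ge \frac14\max\left\{\big\||B|^2+|C^*|^2\big\|,\ \big\||B^*|^2+|C|^2\big\|\right\}.$$
   Context: $\mathcal{B}(\mathcal{H})$ is the algebra of bounded linear operators on $\mathcal{H}$ with operator norm $\|\cdot\|$. For $A\in\mathcal{B}(\mathcal{H})$, $A^*$ is the adjoint, $|A|=(A^*A)^{1/2}$, $|A^*|=(AA^* )^{1/2}$, and $w(A)=\sup_{\|x\|=1}|\langle Ax,x\rangle|$ is the numerical radius. The operator matrix $\begin{bmatrix}A&B\\C&D\end{bmatrix}$ acts on $\mathcal{H}\oplus\mathcal{H}$ by $(x_1,x_2)\mapsto(Ax_1+Bx_2,\,Cx_1+Dx_2)$; $0$ denotes the zero operator. *)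

(* Defs.v *)
From HB Require Import structures.
From mathcomp Require Import all_boot all_order all_algebra.
From mathcomp Require Import complex.
From mathcomp Require Import classical_sets reals.
Set Implicit Arguments. Unset Strict Implicit. Unset Printing Implicit Defensive.
Import Order.TTheory GRing.Theory Num.Theory.
Local Open Scope ring_scope.
Local Open Scope classical_set_scope.

Section Hilbert.
Variable R : realType.
Local Notation C := (R[i]).

Definition cabs (z : C) : R := Normc.normc z.

Variable H : lmodType C.

Definition is_inner_product (ip : H -> H -> C) : Prop :=
  [/\ (forall (a : C) (x y z : H), ip (a *: x + y) z = a * ip x z + ip y z),
      (forall x y : H, ip x y = (ip y x)^*),
      (forall x : H, 0 <= ip x x) &
      (forall x : H, ip x x = 0 -> x = 0)].

Definition hnorm (ip : H -> H -> C) (x : H) : R := Num.sqrt (complex.Re (ip x x)).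

Definition ip_complete (ip : H -> H -> C) : Prop :=
  forall u : nat -> H,
    (forall e : R, 0 < e -> exists N : nat, forall m n : nat,
        (N <= m)%N -> (N <= n)%N -> hnorm ip (u m - u n) < e) ->
    exists l : H, forall e : R, 0 < e -> exists N : nat, forall n : nat,
        (N <= n)%N -> hnorm ip (u n - l) < e.

Definition is_hilbert (ip : H -> H -> C) : Prop :=
  is_inner_product ip /\ ip_complete ip.

Definition bounded_op (ip : H -> H -> C) (T : H -> H) : Prop :=
  (forall (a : C) (x y : H), T (a *: x + y) = a *: T x + T y) /\
  exists M : R, forall x : H, hnorm ip (T x) <= M * hnorm ip x.

Definition is_adjoint (ip : H -> H -> C) (T Ts : H -> H) : Prop :=
  forall x y : H, ip (T x) y = ip x (Ts y).

Definition opnorm (ip : H -> H -> C) (T : H -> H) : R :=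
  sup [set hnorm ip (T x) | x in [set x : H | hnorm ip x <= 1]].

End Hilbert.

Definition numrad (R : realType) (T : Type) (ip : T -> T -> R[i]) (nrm : T -> R)
  (A : T -> T) : R :=
  sup [set cabs (ip (A x) x) | x in [set x : T | nrm x = 1]].

Definition ip2 (R : realType) (H : lmodType R[i]) (ip : H -> H -> R[i])
  (x y : H * H) : R[i] := ip x.1 y.1 + ip x.2 y.2.

Definition hnorm2 (R : realType) (H : lmodType R[i]) (ip : H -> H -> R[i])
  (x : H * H) : R := Num.sqrt (complex.Re (ip2 ip x x)).

(** the operator matrix [A B; C D] acting on H (+) H *)
Definition opmx (R : realType) (H : lmodType R[i]) (A B C D : H -> H)
  (x : H * H) : H * H := (A x.1 + B x.2, C x.1 + D x.2).

Definition opcomp (H : Type) (S T : H -> H) : H -> H := fun x => S (T x).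
Definition opadd (R : realType) (H : lmodType R[i]) (S T : H -> H) : H -> H :=
  fun x => S x + T x.
Definition opsub (R : realType) (H : lmodType R[i]) (S T : H -> H) : H -> H :=
  fun x => S x - T x.
Definition opzero (R : realType) (H : lmodType R[i]) : H -> H := fun _ => 0.

(* Main.v *)
Require Import Defs.
From HB Require Import structures.
From mathcomp Require Import all_boot all_order all_algebra.
From mathcomp Require Import complex.
From mathcomp Require Import boolp classical_sets reals.
From mathcomp Require Import ring lra.
Import Order.TTheory GRing.Theory Num.Theory.
Local Open Scope ring_scope.
Set Implicit Arguments. Unset Strict Implicit. Unset Printing Implicit Defensive.

Section Cplx.
Variable R : realType.
Local Open Scope complex_scope.
Implicit Types z w : R[i].

Lemma cReD z w : complex.Re (z + w) = complex.Re z + complex.Re w.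
Proof. by case: z => a b; case: w => c d. Qed.
Lemma cReN z : complex.Re (- z) = - complex.Re z.
Proof. by case: z => a b. Qed.
Lemma cReB z w : complex.Re (z - w) = complex.Re z - complex.Re w.
Proof. by rewrite cReD cReN. Qed.
Lemma cRe_conj z : complex.Re (z^*)%R = complex.Re z.
Proof. by case: z => a b. Qed.
Lemma cconjD z w : ((z + w)^* = z^* + w^*)%R.
Proof. case: z => a b; case: w => c d /=. congr (_ +i* _); ring. Qed.
Lemma cconjM z w : ((z * w)^* = z^* * w^*)%R.
Proof. case: z => a b; case: w => c d /=. congr (_ +i* _); ring. Qed.
Lemma cconjK z : ((z^*)^* = z)%R.
Proof. case: z => a b /=. congr (_ +i* _); ring. Qed.
Lemma cconjN z : ((- z)^* = - z^*)%R.
Proof. case: z => a b /=. congr (_ +i* _). Qed.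
Lemma cconjR (r : R) : ((r%:C)^* = r%:C)%R.
Proof. rewrite /= /real_complex_def /=. congr (_ +i* _); ring. Qed.
Lemma cReMR (r : R) z : complex.Re (r%:C * z) = r * complex.Re z.
Proof. case: z => a b /=. ring. Qed.
Lemma cRe_iconj z : complex.Re ('i * z^*)%R = complex.Re (- ('i * z)).
Proof. case: z => a b /=. ring. Qed.
Lemma cRe_i_mul_mi (r : R) z : complex.Re ('i * ((- 'i) * r%:C * z)) = r * complex.Re z.
Proof. case: z => a b /=. ring. Qed.
Lemma cconji : ('i^* = - 'i :> R[i])%R.
Proof. rewrite /=. congr (_ +i* _). by rewrite oppr0. Qed.
Lemma cabs_ge_Re z : complex.Re z <= cabs z.
Proof.
case: z => a b; change (cabs (a +i* b)) with (Num.sqrt (a^+2 + b^+2)).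
apply: le_trans (ler_norm a) _.
rewrite -sqrtr_sqr ler_sqrt ?addr_ge0 ?sqr_ge0 //.
by rewrite lerDl sqr_ge0.
Qed.
Lemma cabs_ge0 z : 0 <= cabs z.
Proof. by case: z => a b; change (cabs (a +i* b)) with (Num.sqrt (a^+2 + b^+2)); rewrite sqrtr_ge0. Qed.
Lemma cabsD z w : cabs (z + w) <= cabs z + cabs w.
Proof. exact: le_normcD. Qed.
Lemma cabs_le z : cabs z <= `|complex.Re z| + `|complex.Im z|.
Proof.
case: z => a b; change (cabs (a +i* b)) with (Num.sqrt (a^+2 + b^+2)) => /=.
rewrite -[X in _ <= X]ger0_norm ?addr_ge0 ?normr_ge0 // -sqrtr_sqr.
rewrite ler_sqrt ?sqr_ge0 // sqrrD !real_normK ?num_real //.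
have := mulr_ge0 (normr_ge0 a) (normr_ge0 b). rewrite mulr2n. lra.
Qed.
Lemma cabs_real (r : R) : cabs r%:C = `|r|.
Proof.
change (cabs (r +i* 0)) with (Num.sqrt (r^+2 + 0^+2)).
by rewrite /= expr0n /= addr0 sqrtr_sqr.
Qed.
Lemma cabs_i : cabs 'i = 1 :> R.
Proof.
change (cabs (0 +i* 1)) with (Num.sqrt (0^+2 + 1^+2) : R).
by rewrite /= expr0n /= add0r expr1n sqrtr1.
Qed.
Lemma cabsM z w : cabs (z * w) = cabs z * cabs w.
Proof. exact: Normc.normcM. Qed.
Lemma cabs0 : cabs 0 = 0 :> R.
Proof. exact: Normc.normc0. Qed.
Lemma cRe_nsq z (r : R) : complex.Re (z * (z^* * r%:C))%R = cabs z ^+ 2 * r.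
Proof.
case: z => a b; change (cabs (a +i* b)) with (Num.sqrt (a^+2 + b^+2)).
rewrite sqr_sqrtr ?addr_ge0 ?sqr_ge0 //= /=. ring.
Qed.
Lemma cRRM (r s : R) z : r%:C * (s%:C * z) = (r * s)%:C * z.
Proof. case: z => a b /=. congr (_ +i* _); ring. Qed.
Lemma cRe_mi z : complex.Re (- 'i * z) = complex.Im z.
Proof. case: z => a b /=. ring. Qed.
Lemma cRe_i z : complex.Re ('i * z) = - complex.Im z.
Proof. case: z => a b /=. ring. Qed.
Lemma cReR (r : R) : complex.Re r%:C = r.
Proof. by []. Qed.
End Cplx.
Section IP.
Variable R : realType.
Variable H : lmodType R[i].
Variable ip : H -> H -> R[i].
Hypothesis hip : is_inner_product ip.
Local Notation N := (hnorm ip).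
Local Notation Re := complex.Re.
Local Open Scope complex_scope.
Definition nsq (x : H) : R := Re (ip x x).
Implicit Types x y z u v : H.

Lemma ipDl x y z : ip (x + y) z = ip x z + ip y z.
Proof. case: hip => h _ _ _; by rewrite -[x in LHS]scale1r h mul1r. Qed.
Lemma ip0l z : ip 0 z = 0.
Proof. by have := ipDl 0 0 z; rewrite addr0 -{1}[ip 0 z]addr0 => /addrI. Qed.
Lemma ipZl a x z : ip (a *: x) z = a * ip x z.
Proof. case: hip => h _ _ _; by rewrite -[a *: x]addr0 h ip0l addr0. Qed.
Lemma ipNl x z : ip (- x) z = - ip x z.
Proof. by rewrite -scaleN1r ipZl mulN1r. Qed.
Lemma ipBl x y z : ip (x - y) z = ip x z - ip y z.
Proof. by rewrite ipDl ipNl. Qed.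
Lemma ipC x y : ip x y = ((ip y x)^*)%R.
Proof. by case: hip => _ h _ _. Qed.
Lemma ip0r z : ip z 0 = 0.
Proof. by rewrite ipC ip0l conjC0. Qed.
Lemma ipDr z x y : ip z (x + y) = ip z x + ip z y.
Proof. by rewrite ipC ipDl cconjD -!ipC. Qed.
Lemma ipZr a z x : ip z (a *: x) = (a^*)%R * ip z x.
Proof. by rewrite ipC ipZl cconjM -ipC. Qed.
Lemma ipNr z x : ip z (- x) = - ip z x.
Proof. by rewrite ipC ipNl cconjN -ipC. Qed.
Lemma ipBr z x y : ip z (x - y) = ip z x - ip z y.
Proof. by rewrite ipDr ipNr. Qed.
Lemma ReipC x y : Re (ip x y) = Re (ip y x).
Proof. by rewrite ipC cRe_conj. Qed.
Lemma ipxx x : ip x x = (nsq x)%:C.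
Proof.
case: hip => _ _ h _; have := h x; rewrite /nsq.
case: (ip x x) => a b; rewrite lecE /= => /andP[/eqP -> _]. by [].
Qed.
Lemma nsq_ge0 x : 0 <= nsq x.
Proof. case: hip => _ _ h _; have := h x; rewrite /nsq lecE => /andP[_]. by []. Qed.
Lemma nsq_eq0 x : nsq x = 0 -> x = 0.
Proof. case: hip => _ _ _ h => e; apply: h; by rewrite ipxx e. Qed.
Lemma NE x : N x = Num.sqrt (nsq x).
Proof. by []. Qed.
Lemma N_ge0 x : 0 <= N x.
Proof. by rewrite NE sqrtr_ge0. Qed.
Lemma N_sq x : N x ^+ 2 = nsq x.
Proof. by rewrite NE sqr_sqrtr // nsq_ge0. Qed.
Lemma N_eq0 x : N x = 0 -> x = 0.
Proof.
move=> e; apply: nsq_eq0; by rewrite -N_sq e expr0n.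
Qed.
Lemma nsq0 : nsq 0 = 0.
Proof. by rewrite /nsq ip0l. Qed.
Lemma N0 : N 0 = 0.
Proof. by rewrite NE nsq0 sqrtr0. Qed.
Lemma nsqD x y : nsq (x + y) = nsq x + nsq y + 2 * Re (ip x y).
Proof.
rewrite /nsq !ipDl !ipDr !cReD (ReipC y x). ring.
Qed.
Lemma nsqZ a x : nsq (a *: x) = cabs a ^+ 2 * nsq x.
Proof. by rewrite /nsq ipZl ipZr ipxx cRe_nsq. Qed.
Lemma NZ a x : N (a *: x) = cabs a * N x.
Proof.
by rewrite !NE nsqZ sqrtrM ?sqr_ge0 // sqrtr_sqr ger0_norm // cabs_ge0.
Qed.
Lemma nsqN x : nsq (- x) = nsq x.
Proof. by rewrite /nsq ipNl ipNr opprK. Qed.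
Lemma NN x : N (- x) = N x.
Proof. by rewrite !NE nsqN. Qed.

Lemma CS x y : Re (ip x y) <= N x * N y.
Proof.
have [->|yn0] := eqVneq y 0.
  by rewrite ip0r N0 mulr0.
have ny : 0 < nsq y.
  rewrite lt_def nsq_ge0 andbT; apply/eqP => /nsq_eq0 e; by rewrite e eqxx in yn0.
set r := Re (ip x y).
set t := r / nsq y.
have etr : r = t * nsq y by rewrite /t mulfVK // gt_eqF.
have h := nsq_ge0 (x + (- t)%:C *: y).
rewrite nsqD nsqZ ipZr cconjR cReMR cabs_real -/r real_normK ?num_real // in h.
have h2 : r ^+ 2 <= (N x * N y) ^+ 2.
  rewrite exprMn !N_sq. rewrite etr in h *. nra.
have := mulr_ge0 (N_ge0 x) (N_ge0 y). nra.
Qed.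

Lemma CSabs x y : `|Re (ip x y)| <= N x * N y.
Proof.
rewrite ler_norml CS andbT lerNl -cReN -ipNl -(NN x). exact: CS.
Qed.
Lemma N_i x : N ('i *: x) = N x.
Proof. by rewrite NZ cabs_i mul1r. Qed.
Lemma CScabs x y : cabs (ip x y) <= 2 * (N x * N y).
Proof.
apply: (le_trans (cabs_le (ip x y))).
have -> : complex.Im (ip x y) = Re (ip x ('i *: y)).
  by rewrite ipZr cconji cRe_mi.
have := CSabs x y; have := CSabs x ('i *: y); rewrite N_i. lra.
Qed.
Lemma N_tri x y : N (x + y) <= N x + N y.
Proof.
rewrite -[X in _ <= X]ger0_norm ?addr_ge0 ?N_ge0 // -sqrtr_sqr NE ler_sqrt ?sqr_ge0 //.
rewrite nsqD sqrrD !N_sq. have := CS x y. lra.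
Qed.
Lemma N_sub x y : N (x - y) <= N x + N y.
Proof. by rewrite -(NN y) N_tri. Qed.
Lemma N_double x : N (x + x) = 2 * N x.
Proof.
rewrite !NE nsqD; change (Re (ip x x)) with (nsq x).
have -> : nsq x + nsq x + 2 * nsq x = 2 ^+ 2 * nsq x by ring.
by rewrite sqrtrM ?sqr_ge0 // sqrtr_sqr ger0_norm.
Qed.
Lemma ip_ext u w : (forall v, ip v u = ip v w) -> u = w.
Proof.
move=> h; apply/eqP; rewrite -subr_eq0; apply/eqP; apply: nsq_eq0.
by rewrite /nsq ipBr h subrr.
Qed.
End IP.
Section Ops.
Variable R : realType.
Variable H : lmodType R[i].
Variable ip : H -> H -> R[i].
Hypothesis hip : is_inner_product ip.
Local Notation N := (hnorm ip).
Local Notation Re := complex.Re.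
Local Open Scope classical_set_scope.
Local Open Scope complex_scope.
Implicit Types x y z u v : H.

Definition lin (T : H -> H) := forall (a : R[i]) x y, T (a *: x + y) = a *: T x + T y.

Lemma linD {T} : lin T -> forall x y, T (x + y) = T x + T y.
Proof. by move=> h x y; rewrite -[x in LHS]scale1r h scale1r. Qed.
Lemma lin0 {T} : lin T -> T 0 = 0.
Proof. by move=> h; have := linD h 0 0; rewrite addr0 -{1}[T 0]addr0 => /addrI. Qed.
Lemma linZ {T} : lin T -> forall a x, T (a *: x) = a *: T x.
Proof. by move=> h a x; rewrite -[a *: x]addr0 h lin0 // addr0. Qed.
Lemma linN {T} : lin T -> forall x, T (- x) = - T x.
Proof. by move=> h x; rewrite -scaleN1r linZ // scaleN1r. Qed.
Lemma linB {T} : lin T -> forall x y, T (x - y) = T x - T y.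
Proof. by move=> h x y; rewrite linD // linN. Qed.

Lemma adj_sym T Ts : is_adjoint ip T Ts -> is_adjoint ip Ts T.
Proof. by move=> h x y; rewrite ipC // -h -ipC. Qed.

Lemma adj_lin T Ts : is_adjoint ip T Ts -> lin Ts.
Proof.
move=> h a x y; apply: (ip_ext hip) => v.
by rewrite -h ipDr // ipZr // h ipDr // ipZr // h.
Qed.

Lemma adj_bound T Ts M : is_adjoint ip T Ts -> 0 <= M ->
  (forall u, N (T u) <= M * N u) -> forall y, N (Ts y) <= M * N y.
Proof.
move=> h M0 hb y.
have e : N (Ts y) ^+ 2 <= M * N (Ts y) * N y.
  rewrite N_sq // /nsq -h.
  apply: le_trans (CS hip _ _) _.
  by rewrite ler_wpM2r ?N_ge0.
have [a0|an0] := eqVneq (N (Ts y)) 0.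
  by rewrite a0 mulr_ge0 // N_ge0.
have ha : 0 < N (Ts y) by rewrite lt_def an0 N_ge0.
rewrite -(ler_pM2l ha). rewrite expr2 in e. lra.
Qed.

Definition bnd (T : H -> H) := exists2 M, 0 <= M & forall u, N (T u) <= M * N u.

Lemma bnd_of T : bounded_op ip T -> lin T /\ bnd T.
Proof.
case=> hl [M hM]; split => //; exists (Num.max M 0); first by rewrite le_max lexx orbT.
move=> u; apply: le_trans (hM u) _; by rewrite ler_wpM2r ?N_ge0 // le_max lexx.
Qed.

Lemma opnorm_le T K : (forall x, N x <= 1 -> N (T x) <= K) -> opnorm ip T <= K.
Proof.
move=> h; apply: ge_sup.
  by exists (N (T 0)); exists 0 => //=; rewrite N0 // ler01.
by move=> _ [x hx <-]; apply: h.
Qed.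

Lemma opnorm_ub T : bnd T -> forall x, N x <= 1 -> N (T x) <= opnorm ip T.
Proof.
case=> M M0 hM x hx; apply: ub_le_sup; last by exists x.
exists M => _ [y hy <-]; apply: le_trans (hM y) _.
by rewrite -[X in _ <= X]mulr1 ler_wpM2l.
Qed.

Lemma opnorm_ge0 T : bnd T -> 0 <= opnorm ip T.
Proof.
move=> hb; apply: le_trans (opnorm_ub hb (x:=0) _); first exact: N_ge0 ip _.
by rewrite N0 // ler01.
Qed.

Lemma opnorm_scale T : lin T -> bnd T -> forall u, N (T u) <= opnorm ip T * N u.
Proof.
move=> hl hb u.
have [->|un0] := eqVneq u 0.
  by rewrite lin0 // N0 // mulr0.
have n0 : 0 < N u.
  rewrite lt_def N_ge0 andbT; apply/eqP => /(N_eq0 hip) e; by rewrite e eqxx in un0.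
set n := N u in n0 *.
have e : n * n^-1 = 1 by rewrite mulfV // gt_eqF.
have ni : 0 <= n^-1 by rewrite invr_ge0 ltW.
have h : n^-1 * N (T u) <= opnorm ip T.
  have h1 := opnorm_ub hb (x := (n^-1)%:C *: u).
  rewrite linZ // NZ // cabs_real ger0_norm // in h1.
  apply: h1. rewrite NZ // cabs_real ger0_norm // mulrC e. exact: lexx.
have := N_ge0 ip (T u). nra.
Qed.
End Ops.
Lemma zmod_id (V : zmodType) (a b c d : V) :
  (a + d) + (a + d) = (a + b + (c + d)) + ((a - b) - (c - d)).
Proof.
rewrite opprB addrACA [RHS]addrACA [a + b + _]addrACA subrr addr0.
by rewrite [c + d]addrC [d + c + _]addrACA subrr addr0.
Qed.

Section Main.
Variable R : realType.
Variable H : lmodType R[i].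
Variable ip : H -> H -> R[i].
Hypothesis hip : is_inner_product ip.
Variables B C Bs Cs : H -> H.
Hypothesis hB : lin B.
Hypothesis hC : lin C.
Hypothesis hBb : bnd ip B.
Hypothesis hCb : bnd ip C.
Hypothesis hBs : is_adjoint ip B Bs.
Hypothesis hCs : is_adjoint ip C Cs.
Local Notation N := (hnorm ip).
Local Notation Re := complex.Re.
Local Open Scope classical_set_scope.
Local Open Scope complex_scope.

Definition T2 := opmx (@opzero R H) B C (@opzero R H).
Definition Wset := [set cabs (ip2 ip (T2 x) x) | x in [set x | hnorm2 ip x = 1]].
Definition w := numrad (ip2 ip) (hnorm2 ip) T2.
Definition nsq2 (x : H * H) := nsq ip x.1 + nsq ip x.2.

Lemma wE : w = sup Wset. Proof. by []. Qed.
Lemma qE x : ip2 ip (T2 x) x = ip (B x.2) x.1 + ip (C x.1) x.2.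
Proof. by rewrite /ip2 /T2 /opmx /opzero /= add0r addr0. Qed.
Lemma hnorm2E x : hnorm2 ip x = Num.sqrt (nsq2 x).
Proof. by rewrite /hnorm2 /ip2 cReD. Qed.
Lemma nsq2_ge0 x : 0 <= nsq2 x.
Proof. by rewrite /nsq2 addr_ge0 // nsq_ge0. Qed.

Lemma W_ub : has_ubound Wset.
Proof.
case: hBb => MB MB0 hMB; case: hCb => MC MC0 hMC.
exists (2 * MB + 2 * MC) => _ [x hx <-].
have e : nsq2 x = 1.
  by rewrite -[nsq2 x]sqr_sqrtr ?nsq2_ge0 // -hnorm2E hx expr1n.
have h1 : N x.1 <= 1.
  have := N_ge0 ip x.1; have := nsq_ge0 hip x.2; rewrite /nsq2 in e.
  rewrite -(N_sq hip x.1) in e. nra.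
have h2 : N x.2 <= 1.
  have := N_ge0 ip x.2; have := nsq_ge0 hip x.1; rewrite /nsq2 in e.
  rewrite -(N_sq hip x.2) in e. nra.
rewrite qE; apply: (le_trans (cabsD _ _)).
have a1 := CScabs hip (B x.2) x.1.
have a2 := CScabs hip (C x.1) x.2.
have b1 := hMB x.2. have b2 := hMC x.1.
have := N_ge0 ip x.1; have := N_ge0 ip x.2.
have := N_ge0 ip (B x.2); have := N_ge0 ip (C x.1).
nra.
Qed.

Lemma w_ge0 : 0 <= w.
Proof.
rewrite wE; case: (pselect (Wset !=set0)) => [[y Wy]|hn].
  apply: le_trans (ub_le_sup W_ub Wy).
  by case: Wy => x _ <-; exact: cabs_ge0.
have -> : Wset = set0.
  by apply/seteqP; split => // y hy; exfalso; apply: hn; exists y.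
by rewrite sup0.
Qed.

Lemma w_hom x : cabs (ip2 ip (T2 x) x) <= w * nsq2 x.
Proof.
have [e0|en0] := eqVneq (nsq2 x) 0.
  have h1 : nsq ip x.1 = 0.
    have := nsq_ge0 hip x.1; have := nsq_ge0 hip x.2; rewrite /nsq2 in e0. lra.
  have h2 : nsq ip x.2 = 0.
    have := nsq_ge0 hip x.1; have := nsq_ge0 hip x.2; rewrite /nsq2 in e0. lra.
  rewrite qE (nsq_eq0 hip h1) (nsq_eq0 hip h2) !(ip0r hip) addr0 e0 mulr0 cabs0.
  exact: lexx.
have sp : 0 < Num.sqrt (nsq2 x).
  by rewrite sqrtr_gt0 lt_def en0 nsq2_ge0.
set s := Num.sqrt (nsq2 x) in sp.
have es : s ^+ 2 = nsq2 x by rewrite sqr_sqrtr // nsq2_ge0.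
set r := s^-1.
have ers : r * s = 1 by rewrite mulVf // gt_eqF.
have r0 : 0 <= r by rewrite invr_ge0 ltW.
set y := (r%:C *: x.1, r%:C *: x.2).
have hy : hnorm2 ip y = 1.
  rewrite hnorm2E /nsq2 /= !(nsqZ hip) cabs_real real_normK ?num_real //.
  rewrite -mulrDr -/(nsq2 x) -es -exprMn ers expr1n sqrtr1 //.
have Wy : Wset (cabs (ip2 ip (T2 y) y)) by exists y.
have h := ub_le_sup W_ub Wy; rewrite -wE in h.
have eq : ip2 ip (T2 y) y = (r * r)%:C * ip2 ip (T2 x) x.
  rewrite !qE /= !linZ // !(ipZl hip) !(ipZr hip) !cconjR !cRRM mulrDr //.
rewrite eq cabsM cabs_real ger0_norm ?mulr_ge0 // in h.
rewrite -es.
have -> : cabs (ip2 ip (T2 x) x) = s ^+ 2 * (r * r * cabs (ip2 ip (T2 x) x)).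
  by rewrite mulrA -expr2 -exprMn [s * r]mulrC ers expr1n mul1r.
rewrite [w * _]mulrC ler_wpM2l //; exact: sqr_ge0.
Qed.

Lemma partA1 z : N z <= 1 -> N (B z + Cs z) <= 2 * w.
Proof.
move=> hz; set v := B z + Cs z.
have [v0|vn0] := eqVneq (N v) 0.
  by rewrite v0 mulr_ge0 ?ler0n ?w_ge0.
have vp : 0 < N v by rewrite lt_def vn0 N_ge0.
set t := (N v)^-1.
have et : t * N v = 1 by rewrite mulVf // gt_eqF.
have t0 : 0 <= t by rewrite invr_ge0 ltW.
have h := w_hom (t%:C *: v, z).
have hre : Re (ip2 ip (T2 (t%:C *: v, z)) (t%:C *: v, z)) = N v.
  rewrite qE /= cReD hCs (ReipC hip (t%:C *: v) (Cs z)) -cReD -(ipDl hip) -/v.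
  rewrite (ipZr hip) cconjR (ipxx hip) cReMR cReR -(N_sq hip v).
  rewrite expr2 mulrA et mul1r //.
have := cabs_ge_Re (ip2 ip (T2 (t%:C *: v, z)) (t%:C *: v, z)).
rewrite hre => h2.
rewrite /nsq2 /= (nsqZ hip) cabs_real real_normK ?num_real // -(N_sq hip v) in h.
rewrite -exprMn et expr1n -(N_sq hip z) in h.
have hz2 : N z ^+ 2 <= 1.
  by rewrite expr_le1 // N_ge0.
have : w * (1 + N z ^+ 2) <= w * 2 by rewrite ler_wpM2l ?w_ge0 // lerD2l.
lra.
Qed.

Lemma partA2 z : N z <= 1 -> N (B z - Cs z) <= 2 * w.
Proof.
move=> hz; set v := B z - Cs z.
have [v0|vn0] := eqVneq (N v) 0.
  by rewrite v0 mulr_ge0 ?ler0n ?w_ge0.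
have vp : 0 < N v by rewrite lt_def vn0 N_ge0.
set t := (N v)^-1.
have et : t * N v = 1 by rewrite mulVf // gt_eqF.
have t0 : 0 <= t by rewrite invr_ge0 ltW.
set y := ('i * t%:C) *: v.
have h := w_hom (y, z).
have hre : Re ('i * ip2 ip (T2 (y, z)) (y, z)) = N v.
  rewrite qE /= hCs (ipC hip y (Cs z)) mulrDr cReD cRe_iconj -cReD -mulrBr.
  rewrite -(ipBl hip) -/v /y (ipZr hip) cconjM cconji cconjR cRe_i_mul_mi.
  change (Re (ip v v)) with (nsq ip v); rewrite -(N_sq hip v) expr2 mulrA et mul1r //.
have := cabs_ge_Re ('i * ip2 ip (T2 (y, z)) (y, z)).
rewrite hre cabsM cabs_i mul1r => h2.
rewrite /nsq2 /= /y (nsqZ hip) cabsM cabs_i mul1r cabs_real real_normK ?num_real //  in h.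
rewrite -(N_sq hip v) -exprMn et expr1n -(N_sq hip z) in h.
have hz2 : N z ^+ 2 <= 1.
  by rewrite expr_le1 // N_ge0.
have : w * (1 + N z ^+ 2) <= w * 2 by rewrite ler_wpM2l ?w_ge0 // lerD2l.
lra.
Qed.
End Main.
Section Ops2.
Variable R : realType.
Variable H : lmodType R[i].
Variable ip : H -> H -> R[i].
Hypothesis hip : is_inner_product ip.
Local Notation N := (hnorm ip).

Lemma lin_add (S T : H -> H) : lin S -> lin T -> lin (opadd S T).
Proof. by move=> hS hT a x y; rewrite /opadd hS hT scalerDr addrACA. Qed.
Lemma lin_sub (S T : H -> H) : lin S -> lin T -> lin (opsub S T).
Proof. by move=> hS hT a x y; rewrite /opsub hS hT scalerBr opprD addrACA. Qed.
Lemma bnd_add (S T : H -> H) : bnd ip S -> bnd ip T -> bnd ip (opadd S T).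
Proof.
case=> a a0 ha [b b0 hb]; exists (a + b); first exact: addr_ge0.
move=> u; apply: le_trans (N_tri hip _ _) _; rewrite mulrDl; exact: lerD.
Qed.
Lemma bnd_sub (S T : H -> H) : bnd ip S -> bnd ip T -> bnd ip (opsub S T).
Proof.
case=> a a0 ha [b b0 hb]; exists (a + b); first exact: addr_ge0.
move=> u; apply: le_trans (N_sub hip _ _) _; rewrite mulrDl; exact: lerD.
Qed.
Lemma adj_add S Ss T Ts : is_adjoint ip S Ss -> is_adjoint ip T Ts ->
  is_adjoint ip (opadd S T) (opadd Ss Ts).
Proof. by move=> hS hT x y; rewrite /opadd (ipDl hip) (ipDr hip) hS hT. Qed.
Lemma adj_sub S Ss T Ts : is_adjoint ip S Ss -> is_adjoint ip T Ts ->
  is_adjoint ip (opsub S T) (opsub Ss Ts).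
Proof. by move=> hS hT x y; rewrite /opsub (ipBl hip) (ipBr hip) hS hT. Qed.

Lemma opnorm_half (X Y1 Y2 : H -> H) (a b : R) : 0 <= a -> 0 <= b ->
  (forall x, X x + X x = Y1 x + Y2 x) ->
  (forall x, N (Y1 x) <= a * N x) -> (forall x, N (Y2 x) <= b * N x) ->
  opnorm ip X <= (a + b) / 2.
Proof.
move=> a0 b0 e h1 h2; apply: (opnorm_le hip) => x hx.
have := N_tri hip (Y1 x) (Y2 x); rewrite -e (N_double hip).
have := h1 x; have := h2 x; have := N_ge0 ip x.
have : a * N x <= a by rewrite -[X in _ <= X]mulr1 ler_wpM2l.
have : b * N x <= b by rewrite -[X in _ <= X]mulr1 ler_wpM2l.
lra.
Qed.
End Ops2.
Theorem mainTheorem6 (R : realType) (H : lmodType R[i]) (ip : H -> H -> R[i])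
  (B C Bs Cs : H -> H) :
  is_hilbert ip ->
  bounded_op ip B -> bounded_op ip C ->
  is_adjoint ip B Bs -> is_adjoint ip C Cs ->
  let w := numrad (ip2 ip) (hnorm2 ip) (opmx (@opzero R H) B C (@opzero R H)) in
  let p := opnorm ip (opadd B Cs) in
  let m := opnorm ip (opsub B Cs) in
  let mid := 8^-1 * (Num.max (p ^+ 2) (m ^+ 2) + p * m) in
  w ^+ 2 >= mid /\
  mid >= 4^-1 * Num.max (opnorm ip (opadd (opcomp Bs B) (opcomp C Cs)))
                        (opnorm ip (opadd (opcomp B Bs) (opcomp Cs C))).
Proof.
move=> [hip _] hBo hCo hBs hCs w0 p m mid.
have [hB hBb] := bnd_of hBo.
have [hC hCb] := bnd_of hCo.
have hBsl := adj_lin hip hBs.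
have hCsl := adj_lin hip hCs.
have hCsb : bnd ip Cs.
  case: hCb => M M0 hM; exists M => //; exact: (adj_bound hip hCs M0 hM).
have hCsC : is_adjoint ip Cs C := adj_sym hip hCs.
have l1 : lin (opadd B Cs) := lin_add hB hCsl.
have b1 : bnd ip (opadd B Cs) := bnd_add hip hBb hCsb.
have a1 : is_adjoint ip (opadd B Cs) (opadd Bs C) := adj_add hip hBs hCsC.
have l2 : lin (opsub B Cs) := lin_sub hB hCsl.
have b2 : bnd ip (opsub B Cs) := bnd_sub hip hBb hCsb.
have a2 : is_adjoint ip (opsub B Cs) (opsub Bs C) := adj_sub hip hBs hCsC.
have p0 : 0 <= p := opnorm_ge0 hip b1.
have m0 : 0 <= m := opnorm_ge0 hip b2.
have ew : w0 = w ip B C by [].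
have wp : 0 <= w0 by rewrite ew; exact: (w_ge0 hip hBb hCb).
have pw : p <= 2 * w0.
  rewrite ew; apply: (opnorm_le hip) => z hz; exact: (partA1 hip hB hC hBb hCb hCs hz).
have mw : m <= 2 * w0.
  rewrite ew; apply: (opnorm_le hip) => z hz; exact: (partA2 hip hB hC hBb hCb hCs hz).
have sc1 := opnorm_scale hip l1 b1.
have sc2 := opnorm_scale hip l2 b2.
have sa1 := adj_bound hip a1 p0 sc1.
have sa2 := adj_bound hip a2 m0 sc2.
have S1 : opnorm ip (opadd (opcomp Bs B) (opcomp C Cs)) <= (p * p + m * m) / 2.
  apply: (opnorm_half hip (Y1 := fun x => opadd Bs C (opadd B Cs x))
                          (Y2 := fun x => opsub Bs C (opsub B Cs x))).
  - exact: mulr_ge0.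
  - exact: mulr_ge0.
  - move=> x; rewrite /opadd /opsub /opcomp (linB hBsl) (linB hC) (linD hBsl) (linD hC).
    exact: zmod_id.
  - move=> x; apply: le_trans (sa1 _) _; rewrite -mulrA ler_wpM2l //; exact: sc1.
  - move=> x; apply: le_trans (sa2 _) _; rewrite -mulrA ler_wpM2l //; exact: sc2.
have S2 : opnorm ip (opadd (opcomp B Bs) (opcomp Cs C)) <= (p * p + m * m) / 2.
  apply: (opnorm_half hip (Y1 := fun x => opadd B Cs (opadd Bs C x))
                          (Y2 := fun x => opsub B Cs (opsub Bs C x))).
  - exact: mulr_ge0.
  - exact: mulr_ge0.
  - move=> x; rewrite /opadd /opsub /opcomp (linB hB) (linB hCsl) (linD hB) (linD hCsl).
    exact: zmod_id.
  - move=> x; apply: le_trans (sc1 _) _; rewrite -mulrA ler_wpM2l //; exact: sa1.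
  - move=> x; apply: le_trans (sc2 _) _; rewrite -mulrA ler_wpM2l //; exact: sa2.
have hmax : p * p + m * m <= Num.max (p ^+ 2) (m ^+ 2) + p * m.
  have [pm|mp] := leP p m.
    have : m ^+ 2 <= Num.max (p ^+ 2) (m ^+ 2) by rewrite le_max lexx orbT.
    have : p * p <= p * m by rewrite ler_wpM2l.
    rewrite expr2; lra.
  have : p ^+ 2 <= Num.max (p ^+ 2) (m ^+ 2) by rewrite le_max lexx.
  have : m * m <= p * m by rewrite ler_wpM2r // ltW.
  rewrite expr2; lra.
split.
  have hm2 : Num.max (p ^+ 2) (m ^+ 2) <= 4 * w0 ^+ 2.
    rewrite ge_max; apply/andP; split; nra.
  have : p * m <= 4 * w0 ^+ 2 by nra.
  rewrite /mid; lra.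
have : Num.max (opnorm ip (opadd (opcomp Bs B) (opcomp C Cs)))
               (opnorm ip (opadd (opcomp B Bs) (opcomp Cs C))) <= (p * p + m * m) / 2.
  by rewrite ge_max S1 S2.
rewrite /mid; lra.
Qed.
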